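(* Let $x,z\in X^\infty$. Then $(F_x,\phi_x)\cong(F_z,\phi_z)$ as extended representation graphs if and only if $x\sim_\infty z$.
   Context: $E=(E^0,E^1,s,r)$ is a row-finite directed graph; for each vertex $v$ emitting an edge a fixed edge $e^v\in s^{-1}(v)$ is called special, others nonspecial. The double graph $E_d$ has vertices $E^0$ and edges $e$ (real) and $e^*$ (ghost) for $e\in E^1$, with $s_d(e)=s(e),r_d(e)=r(e),s_d(e^* )=r(e),r_d(e^* )=s(e)$. For a path $p=e_1\dots e_n$ set $p^*=e_n^*\dots e_1^*$. The set $X$ of (finite) basis paths consists of the paths in $E_d$: vertices; $p,p^*$ for paths $p$ of length $\ge1$ in $E$; $pq^*$ with $p=e_1\dots e_k,q=f_1\dots f_n$ of length $\ge1$ in $E$, $r(p)=r(q)$, and $e_k\ne f_n$ or $e_k=f_n$ nonspecial. $X^\infty$ is the set of left-infinite words $x=\dots x_3x_2x_1$ of edges of $E_d$ such that each $x_n\dots x_1$ is a basis path; $x\sim_\infty z$ iff there are $m,n\ge0$ with $\dots x_{m+2}x_{m+1}=\dots z_{n+2}z_{n+1}$. An extended representation graph for $E$ is a pair $(F,\phi)$, $F$ a directed graph, $\phi:F\to E_d$ a graph homomorphism, such that for every $w\in F^0$: (i) $w$ is a source or receives exactly one edge $f_w$; (ii) if $w$ is a source or $\phi(f_w)$ is a nonspecial real edge, $\phi$ maps $s^{-1}(w)$ bijectively onto $s_d^{-1}(\phi(w))$; (iii) if $\phi(f_w)$ is a special real edge, onto $s_d^{-1}(\phi(w))\setminus\{\phi(f_w)^*\}$;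 (iv) if $\phi(f_w)$ is a ghost edge, onto the ghost edges in $s_d^{-1}(\phi(w))$. An isomorphism $(F,\phi)\to(G,\psi)$ is a graph isomorphism $\alpha$ with $\psi\circ\alpha=\phi$. $(F_x,\phi_x)$ for $x=\dots x_2x_1\in X^\infty$: for $i\in\mathbb N$, $X_i$ = basis paths $y=y_1\dots y_n$, $n\ge1$, with $x_iy_1$ a basis path and $y_1\ne x_{i-1}$ if $i\ge2$. Vertices $w_i$ ($i\in\mathbb N$), $w_{i,y}$ ($y\in X_i$), all distinct; edges $f_i$ from $w_{i+1}$ to $w_i$, and $f_{i,y}$ to $w_{i,y}$ from $w_i$ if $|y|=1$, from $w_{i,y_1\dots y_{n-1}}$ if $n\ge2$; $\phi_x(w_i)=r_d(x_i)$, $\phi_x(w_{i,y})=r_d(y)$, $\phi_x(f_i)=x_i$, $\phi_x(f_{i,y})=$ last edge of $y$. *)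

(* Defs.v *)
From Stdlib Require List.
From mathcomp Require Import all_boot.
Set Implicit Arguments. Unset Strict Implicit. Unset Printing Implicit Defensive.

Record digraph := DiGraph { gV : Type; gE : Type; gs : gE -> gV; gr : gE -> gV }.

Definition row_finite (E : digraph) : Prop :=
  forall v : gV E, exists l : seq (gE E), forall e, gs e = v -> List.In e l.

Definition special_choice (E : digraph) (special : gE E -> Prop) : Prop :=
  forall v : gV E, (exists e, gs e = v) -> exists! e, gs e = v /\ special e.

(* Edges of the double graph E_d: real edges e and ghost edges e^*. *)
Inductive dedge (T : Type) := Real of T | Ghost of T.
Arguments Real {T}. Arguments Ghost {T}.

Section Double.
Variable E : digraph.

Definition sd (a : dedge (gE E)) : gV E :=
  match a with Real e => gs e | Ghost e => gr e end.
Definition rd (a : dedge (gE E)) : gV E :=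
  match a with Real e => gr e | Ghost e => gs e end.

Definition double : digraph := DiGraph sd rd.

Fixpoint dpath (l : seq (dedge (gE E))) : Prop :=
  match l with
  | a :: ((b :: _) as l') => rd a = sd b /\ dpath l'
  | _ => True
  end.

Variable special : gE E -> Prop.

(* Basis paths of length >= 1: p (p real path), q^* , or p q^* with
   r(p) = r(q) and e_k <> f_n or e_k = f_n nonspecial.  Writing
   q = f_1 ... f_n, q^* = f_n^* ... f_1^* = map Ghost g with g = f_n ... f_1,
   so f_n is the head of g.  Consecutiveness (dpath) gives that p, q are
   paths in E and r(p) = r(q). *)
Definition basis_path (l : seq (dedge (gE E))) : Prop :=
  l <> [::] /\ dpath l /\
  exists (p g : seq (gE E)),
    l = map Real p ++ map Ghost g /\
    forall p' e f g', p = rcons p' e -> g = f :: g' -> e <> f \/ ~ special e.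

(* Left-infinite words x = ... x_3 x_2 x_1 are encoded as x : nat -> dedge
   with x k = x_{k+1} (shift of indices by one). *)
Definition X_inf (x : nat -> dedge (gE E)) : Prop :=
  forall n, 0 < n -> basis_path (rev (mkseq x n)).   (* x_n ... x_1 *)

Definition sim_inf (x z : nat -> dedge (gE E)) : Prop :=
  exists m n, forall k, x (m + k) = z (n + k).

(* ---- The graph (F_x, phi_x).  Shifted indices: RW i stands for w_{i+1}
   and RWy i y for w_{i+1,y}. ---- *)
Variable x : nat -> dedge (gE E).

(* y in X_{i+1} (paper's index i+1) *)
Definition Xi (i : nat) (y : seq (dedge (gE E))) : Prop :=
  match y with
  | [::] => False
  | y1 :: _ => basis_path y /\ basis_path [:: x i; y1] /\ (0 < i -> y1 <> x i.-1)
  end.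

Inductive rawv := RW of nat | RWy of nat & seq (dedge (gE E)).

Definition validv (v : rawv) : Prop :=
  match v with RW _ => True | RWy i y => Xi i y end.

Definition Fvert := {v : rawv | validv v}.

(* Every vertex except none receives exactly one edge; we index edges by their
   range: the edge into w_i is f_i (from w_{i+1}), the edge into w_{i,y} is
   f_{i,y} (from w_i if |y| = 1, from w_{i, y_1 ... y_{n-1}} otherwise). *)
Definition src_raw (v : rawv) : rawv :=
  match v with
  | RW i => RW i.+1
  | RWy i [::] => RW i
  | RWy i [:: _] => RW i
  | RWy i (y1 :: (y2 :: ys)) => RWy i (belast y1 (y2 :: ys))
  end.

Lemma dpath_rcons (l : seq (dedge (gE E))) a : dpath (rcons l a) -> dpath l.
Proof.
elim: l => [|b [|c l] IH] //= [H1 H2]; split => //; exact: IH.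
Qed.

Lemma basis_path_rcons (l : seq (dedge (gE E))) a :
  l <> [::] -> basis_path (rcons l a) -> basis_path l.
Proof.
move=> ln [_ [hp [p [g [hl hj]]]]]; split => //; split; first exact: dpath_rcons hp.
case/lastP: g hl hj => [|g f] hl hj.
  case/lastP: p hl hj => [|p e] hl hj.
    by move: hl; rewrite /= => /(congr1 size); rewrite size_rcons.
  exists p, [::]; split; last by [].
  by move: hl; rewrite cats0 map_rcons => /rcons_inj [->]; rewrite cats0.
exists p, g; split.
  by move: hl; rewrite map_rcons -rcons_cat => /rcons_inj [->].
move=> p' e f' g' hp' hg'; apply: (hj p' e f' (rcons g' f) hp').
by rewrite hg'.
Qed.

Lemma src_valid (v : rawv) : validv v -> validv (src_raw v).
Proof.
case: v => [i|i [|y1 [|y2 ys]]] //= [hb [h1 h2]]; split; last by split.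
apply: (basis_path_rcons (a := last y2 ys)) => //.
by rewrite rcons_cons -lastI.
Qed.

Definition Fsrc (v : Fvert) : Fvert := exist _ (src_raw (sval v)) (src_valid (svalP v)).

Definition Fx : digraph := @DiGraph Fvert Fvert Fsrc id.

Definition phi0_raw (v : rawv) : gV E :=
  match v with
  | RW i => rd (x i)
  | RWy i [::] => rd (x i) (* unreachable: y is nonempty *)
  | RWy _ (y1 :: ys) => rd (last y1 ys)
  end.

Definition phi1_raw (v : rawv) : dedge (gE E) :=
  match v with
  | RW i => x i
  | RWy i [::] => x i (* unreachable *)
  | RWy _ (y1 :: ys) => last y1 ys
  end.

End Double.

Record ghom (F G : digraph) := GHom { hv : gV F -> gV G; he : gE F -> gE G }.

Definition phix (E : digraph) (special : gE E -> Prop) (x : nat -> dedge (gE E)) :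
  ghom (Fx special x) (double E) :=
  @GHom (Fx special x) (double E)
    (fun v => phi0_raw x (sval v)) (fun e => phi1_raw x (sval e)).

Definition erg_iso (H F G : digraph) (phi : ghom F H) (psi : ghom G H) : Prop :=
  exists (a0 : gV F -> gV G) (a1 : gE F -> gE G),
    bijective a0 /\ bijective a1 /\
    (forall e, gs (a1 e) = a0 (gs e)) /\ (forall e, gr (a1 e) = a0 (gr e)) /\
    (forall v, hv psi (a0 v) = hv phi v) /\ (forall e, he psi (a1 e) = he phi e).

(* Main.v *)
Require Import Defs.
From mathcomp Require Import all_boot.
From Stdlib Require Import ProofIrrelevance ClassicalEpsilon FunctionalExtensionality.
Set Implicit Arguments. Unset Strict Implicit. Unset Printing Implicit Defensive.

Section S.
Variable E : digraph.
Variable special : gE E -> Prop.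
Local Notation D := (dedge (gE E)).

Lemma sig_eqP (P : rawv E -> Prop) (u v : {r | P r}) : sval u = sval v -> u = v.
Proof. case: u => u pu; case: v => v pv /= e; subst v; f_equal; apply: proof_irrelevance. Qed.

Lemma iter_src_RW j k : iter k (@src_raw E) (RW E j) = RW E (j + k).
Proof. by elim: k => [|k IH] /=; [rewrite addn0 | rewrite IH addnS]. Qed.

Lemma src_reaches (r : rawv E) : exists L j, iter L (@src_raw E) r = RW E j.
Proof.
case: r => [i|i y]; first by exists 0, i.
move: (leqnn (size y)); move: {2}(size y) => n.
elim: n y => [|n IH] [|b w] //= hs.
- by exists 1, i.
- by exists 1, i.
- case: w hs => [|c w] hs; first by exists 1, i.
  have hsz : size (belast b (c :: w)) <= n by rewrite size_belast.
  have [L [j hL]] := IH _ hsz.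
  by exists L.+1, j; rewrite iterSr.
Qed.

Lemma iter_sval (x : nat -> D) n (v : Fvert special x) :
  sval (iter n (@Fsrc _ _ _) v) = iter n (@src_raw E) (sval v).
Proof. by elim: n => [|n IH] //=; rewrite IH. Qed.

Lemma iso_sim (x z : nat -> D) :
  erg_iso (phix special x) (phix special z) -> sim_inf x z.
Proof.
case=> [a0 [a1 [_ [_ [hs [hr [_ hl]]]]]]].
have ha : forall e, a1 e = a0 e := hr.
have hc : forall n v, a0 (iter n (@Fsrc _ _ _) v) = iter n (@Fsrc _ _ _) (a0 v).
  move=> n v; elim: n => [|n IH] //=; rewrite -IH -(ha (iter n _ v)); symmetry; exact: (hs _).
pose v0 : Fvert special x := exist _ (RW E 0) I.
have [L [j hL]] := src_reaches (sval (a0 v0)).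
exists L, j => k.
have h1 := hl (iter (L + k) (@Fsrc _ _ _) v0).
rewrite ha /= in h1.
rewrite hc !iter_sval addnC !iterD hL /= !iter_src_RW /= in h1.
by rewrite add0n in h1; rewrite -h1 addnC.
Qed.

Lemma bp_tail (a : D) l : basis_path special (a :: l) -> l <> [::] -> basis_path special l.
Proof.
case=> _ [hd [p [g [hl hj]]]] hn; split => //; split.
  by case: l hn hd {hl} => [|b l] // _ [].
case: p hl hj => [|a' p] /= hl hj.
  case: g hl hj => [|f g] //= [_ hl'] hj.
  exists [::], g; split => // p' e ? ? hp'; exfalso; move: hp'; by case: p'.
case: hl => _ hl; exists p, g; split => // p' e f g' hp' hg.
by apply: (hj (a' :: p') e f g') => //; rewrite hp'.
Qed.

Lemma bp_prefix (l1 l2 : seq D) : l1 <> [::] -> basis_path special (l1 ++ l2) -> basis_path special l1.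
Proof.
move=> hn; elim/last_ind: l2 => [|l2 c IH]; first by rewrite cats0.
rewrite -rcons_cat => h; apply: IH; apply: basis_path_rcons h.
by case: l1 hn.
Qed.

Lemma bp_glue (a b : D) l : basis_path special (b :: l) -> basis_path special [:: a; b] ->
  basis_path special (a :: b :: l).
Proof.
move=> [_ [hd1 [p1 [g1 [hl1 hj1]]]]] [_ [hd2 [p2 [g2 [hl2 hj2]]]]].
split => //; split; first by split; [exact: hd2.1 | exact: hd1].
clear hd1 hd2; case: a hl2 hj2 => a hl2 hj2.
- case: b hl1 hj1 hl2 hj2 => b hl1 hj1 hl2 hj2.
  + case: p1 hl1 hj1 => [|b' p1] /=; first by case: g1 => [|f g] hh; discriminate.
    case=> eb hl1 hj1; exists (a :: b' :: p1), g1; split; first by rewrite eb hl1.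
    move=> p' e f g' hp' hg; case: p' hp' => [|c p'] /=.
      by case=> _; case: p1 {hl1 hj1}.
    case=> _ hp'; exact: (hj1 p' e f g' hp' hg).
  + case: p1 hl1 hj1 => [|b' p1] /=; last by [].
    case: g1 => [|f1 g1] //= [eb hl1] hj1.
    case: p2 hl2 hj2 => [|c [|c2 p2]] /=.
    * by case: g2.
    * case=> ec; case: g2 => [|d [|d2 g2]] //= [ed] hj2.
      exists [:: a], (f1 :: g1); split; first by rewrite eb hl1.
      move=> p' e f g' hp' [ef _].
      case: p' hp' => [|c' p'] /=; last by case: p' {hl1 hj1 hj2}.
      case=> ee; subst; exact: (hj2 [::] _ _ [::]).
    * by case.
- case: p2 hl2 hj2 => [|c p2] /=; last by [].
  case: g2 => [|d [|d2 g2]] //= [ea hb hg2] hj2.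
  case: p1 hl1 hj1 => [|c p1] /=; last by rewrite hb; move=> hh; discriminate.
  move=> hl1 hj1; exists [::], (a :: g1); split; first by rewrite /= hl1.
  move=> p' e ? ? hp'; exfalso; move: hp'; by case: p'.
Qed.

Lemma map_iota_shift (x : nat -> D) m n :
  map x (iota m.+1 n) = map (fun k => x k.+1) (iota m n).
Proof. by elim: n m => [|n IH] m //=; rewrite IH. Qed.

Lemma X_inf_shift (x : nat -> D) : X_inf special x -> X_inf special (fun k => x k.+1).
Proof.
move=> hx n hn; have := hx n.+1 isT.
rewrite /mkseq /= map_iota_shift rev_cons => h.
apply: basis_path_rcons h.
by case: n hn => // n _; rewrite /= rev_cons; case: (rev _).
Qed.

Lemma phi01 (x : nat -> D) r : phi0_raw x r = rd (phi1_raw x r).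
Proof. by case: r => [i|i [|y1 ys]]. Qed.

Definition dec (a b : D) : {a = b} + {a <> b} := excluded_middle_informative (a = b).

Section Step.
Variable x : nat -> D.
Hypothesis hx : X_inf special x.
Let s := fun k => x k.+1.

Definition fr (r : rawv E) : rawv E :=
  match r with
  | RW i => RW E i.+1
  | RWy i.+1 y => RWy i.+2 y
  | RWy 0 [::] => RWy 1 [::]
  | RWy 0 (y1 :: ys) =>
      if dec y1 (x 0) then (match ys with [::] => RW E 0 | _ => RWy 0 ys end)
      else RWy 1 (y1 :: ys)
  end.

Definition gr_ (r : rawv E) : rawv E :=
  match r with
  | RW 0 => RWy 0 [:: x 0]
  | RW i.+1 => RW E i
  | RWy 0 y => RWy 0 (x 0 :: y)
  | RWy 1 y => RWy 0 y
  | RWy i.+2 y => RWy i.+1 y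
  end.

Lemma gfK r : gr_ (fr r) = r.
Proof.
case: r => [i|[|i] [|y1 ys]] //=.
case: (dec y1 (x 0)) => [e|h] /=; last by []; by case: ys => [|? ?] /=; rewrite e.
Qed.

Lemma fgK r : validv special x r -> fr (gr_ r) = r.
Proof.
case: r => [[|i]|[|[|i]] [|y1 ys]] //=.
- by case: (dec (x 0) (x 0)).
- by case: (dec (x 0) (x 0)).
- case=> _ [_ h]; case: (dec y1 (x 0)) => // e; by case: (h isT).
Qed.

Lemma fr_src r : src_raw (fr r) = fr (src_raw r).
Proof.
case: r => [i|[|i] [|y1 [|y2 ys]]] //=.
- by case: (dec y1 (x 0)).
- case: (dec y1 (x 0)) => h; last by [].
  by case: ys.
Qed.

Lemma fr_phi1 r : phi1_raw x (fr r) = phi1_raw s r.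
Proof.
case: r => [i|[|i] [|y1 ys]] //=.
case: (dec y1 (x 0)) => [e|h] /=; last by []. by case: ys => [|? ?] /=.
Qed.

Lemma fr_valid r : validv special s r -> validv special x (fr r).
Proof.
case: r => [i|[|i] [|y1 ys]] //=.
case: (dec y1 (x 0)) => [e|h].
  case: ys => [|y2 ys] // [hb _]; split; first exact: (bp_tail hb).
  split => //; rewrite -e; exact: (bp_prefix (l1 := [:: y1; y2]) (l2 := ys)).
by case=> hb [h2 _].
Qed.

Lemma bp1 : basis_path special [:: x 0].
Proof. by have := hx (isT : 0 < 1). Qed.
Lemma bp2 : basis_path special [:: x 1; x 0].
Proof. by have := hx (isT : 0 < 2). Qed.

Lemma gr_valid r : validv special x r -> validv special s (gr_ r).
Proof.
case: r => [[|i]|[|[|i]] [|y1 ys]] //=.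
- by split; [exact: bp1 | split; [exact: bp2|]].
- case=> hb [h2 _]; split; first exact: bp_glue.
  by split; [exact: bp2|].
- by case=> hb [h2 h3]; split.
Qed.

Lemma step_iso : erg_iso (phix special s) (phix special x).
Proof.
pose a0 (v : Fvert special s) : Fvert special x := exist _ (fr (sval v)) (fr_valid (svalP v)).
pose b0 (v : Fvert special x) : Fvert special s := exist _ (gr_ (sval v)) (gr_valid (svalP v)).
have hab : cancel a0 b0 by move=> v; apply: sig_eqP; rewrite /= gfK.
have hba : cancel b0 a0 by move=> v; apply: sig_eqP; rewrite /= fgK //; exact: svalP.
exists a0, a0; split; first by exists b0.
split; first by exists b0.
split; first by move=> e; apply: sig_eqP; rewrite /= fr_src.
split; first by [].
split; first by move=> v; rewrite /= !phi01 fr_phi1.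
by move=> e; rewrite /= fr_phi1.
Qed.

End Step.

Lemma iso_sym_gen (H F G : digraph) (phi : ghom F H) (psi : ghom G H) :
  erg_iso phi psi -> erg_iso psi phi.
Proof.
case=> [a0 [a1 [[b0 k0 k0'] [[b1 k1 k1'] [hs [hr [hv he']]]]]]].
exists b0, b1; split; first by exists a0.
split; first by exists a1.
split; first by move=> e; apply: (can_inj k0); rewrite -hs !k1' k0'.
split; first by move=> e; apply: (can_inj k0); rewrite -hr !k1' k0'.
split; first by move=> v; rewrite -hv k0'.
by move=> e; rewrite -he' k1'.
Qed.

Lemma iso_trans_gen (H F G K : digraph) (phi : ghom F H) (psi : ghom G H) (chi : ghom K H) :
  erg_iso phi psi -> erg_iso psi chi -> erg_iso phi chi.
Proof.
case=> [a0 [a1 [ba0 [ba1 [hs [hr [hv he']]]]]]].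
case=> [c0 [c1 [bc0 [bc1 [hs' [hr' [hv' he'']]]]]]].
exists (c0 \o a0), (c1 \o a1); split; first exact: bij_comp.
split; first exact: bij_comp.
split; first by move=> e; rewrite /= hs' hs.
split; first by move=> e; rewrite /= hr' hr.
split; first by move=> v; rewrite /= hv' hv.
by move=> e; rewrite /= he'' he'.
Qed.

Lemma shift_iso m (y : nat -> D) : X_inf special y ->
  X_inf special (fun k => y (m + k)) /\
  erg_iso (phix special (fun k => y (m + k))) (phix special y).
Proof.
move=> hx; elim: m => [|m [IH1 IH2]].
  have -> : (fun k => y (0 + k)) = y by apply: functional_extensionality => k.
  split => //; exists id, id; do 2 (split; first by exists id).
  by [].
have -> : (fun k => y (m.+1 + k)) = (fun k => (fun k => y (m + k)) k.+1).
  by apply: functional_extensionality => k; rewrite addSn addnS.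
split; first exact: (X_inf_shift IH1).
apply: iso_trans_gen IH2; exact: step_iso.
Qed.

Lemma sim_iso (x z : nat -> D) : X_inf special x -> X_inf special z ->
  sim_inf x z -> erg_iso (phix special x) (phix special z).
Proof.
move=> hx hz [m [n h]].
have [_ i1] := shift_iso m hx.
have [_ i2] := shift_iso n hz.
have e : (fun k => x (m + k)) = (fun k => z (n + k)) by apply: functional_extensionality.
rewrite e in i1.
exact: iso_trans_gen (iso_sym_gen i1) i2.
Qed.
End S.

Theorem proposition5p9 (E : digraph) (special : gE E -> Prop)
  (hrf : row_finite E) (hsp : special_choice special)
  (x z : nat -> dedge (gE E))
  (hx : X_inf special x) (hz : X_inf special z) :
  erg_iso (phix special x) (phix special z) <-> sim_inf x z.
Proof.
split; [exact: iso_sim | exact: sim_iso].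
Qed.
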